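(* Let $R$ be a commutative ring in which $2$ is invertible, $I$ an ideal of $R$, and let $Q$ be a free $R$-module of rank $n$ with a fixed ordered basis. Let $\varphi'$ and $\varphi^*$ be invertible symmetric $n\times n$ matrices defining quadratic forms on $Q$ (quadratic spaces $Q_{\varphi'}$, $Q_{\varphi^*}$), with $\varphi'=\epsilon^t\varphi^*\epsilon$ for some $\epsilon\in\mathrm{GL}_n(R)$. Let $m\ge1$ and identify automorphisms of $Q\perp\mathbb{H}(R)^m$ with $(n+2m)\times(n+2m)$ matrices via the basis of $Q$ followed by $x_1,\dots,x_m,f_1,\dots,f_m$. Then $\mathrm{EO}_{(R,I)}(Q_{\varphi'},\mathbb{H}(R)^m)=(\epsilon^{-1}\perp I_{2m})\,\mathrm{EO}_{(R,I)}(Q_{\varphi^*},\mathbb{H}(R)^m)\,(\epsilon\perp I_{2m})$.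
   Context: For an invertible symmetric matrix $\varphi$ on $Q$, $\langle a,b\rangle_\varphi=a^t\varphi b$ in coordinates and $q_\varphi(a)=\tfrac12\langle a,a\rangle_\varphi$. $\mathbb{H}(R)^m=\mathbb{H}(P)$, $P=R^m$, $\mathbb{H}(P)=P\oplus P^*$ with basis $x_1,\dots,x_m$, dual basis $f_1,\dots,f_m$, form $q(y,g)=g(y)$. DSER transformations on $Q_\varphi\perp\mathbb{H}(P)$: for $\alpha:Q\to P$ let $\alpha^*:P^*\to Q$ satisfy $\langle\alpha^*(g),z\rangle_\varphi=g(\alpha(z))$, $E_\alpha(z,y,g)=(z-\alpha^*(g),y+\alpha(z)-\tfrac12\alpha\alpha^*(g),g)$; for $\beta:Q\to P^*$ let $\beta^*:P\to Q$ satisfy $\langle\beta^*(y),z\rangle_\varphi=\beta(z)(y)$, $E^*_\beta(z,y,g)=(z-\beta^*(y),y,g+\beta(z)-\tfrac12\beta\beta^*(y))$. $\mathrm{EO}_R(Q_\varphi,\mathbb{H}(P))$ is generated by all $E_\alpha,E^*_\beta$; $\mathrm{EO}_I(Q_\varphi,\mathbb{H}(P))$ by those with $\alpha(Q)\subseteq IP$, $\beta(Q)\subseteq IP^*$; $\mathrm{EO}_{(R,I)}(Q_\varphi,\mathbb{H}(P))$ is the normal closure of $\mathrm{EO}_I(Q_\varphi,\mathbb{H}(P))$ in $\mathrm{EO}_R(Q_\varphi,\mathbb{H}(P))$. *)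

(* Defs.v *)
From HB Require Import structures.
From mathcomp Require Import all_boot all_order all_algebra.
Set Implicit Arguments. Unset Strict Implicit. Unset Printing Implicit Defensive.
Import GRing.Theory.
Local Open Scope ring_scope.

Section DSER.
Variable R : comUnitRingType.

Definition is_ideal (I : R -> Prop) : Prop :=
  [/\ I 0, (forall x y, I x -> I y -> I (x + y)) & (forall r x, I x -> I (r * x))].

Definition mx_in {p q : nat} (I : R -> Prop) (A : 'M[R]_(p, q)) : Prop :=
  forall i j, I (A i j).

Variables (n m : nat).

(* Coordinates: Q = R^n (column vectors), P = R^m with basis x_1..x_m,
   P^* = R^m in the dual basis f_1..f_m. Vectors of Q ⊥ H(P) are columns
   (z ; y ; g) of size n + (m + m). *)

(* For alpha : Q -> P given by the m x n matrix A, the adjoint alpha^* : P^* -> Q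
   w.r.t. <a,b>_phi = a^T phi b is phi^{-1} A^T. Similarly for beta. *)
Definition adj (phi : 'M[R]_n) (A : 'M[R]_(m, n)) : 'M[R]_(n, m) :=
  invmx phi *m A^T.

Definition half : R := (2%:R)^-1.

(* E_alpha (z,y,g) = (z - alpha^* g, y + alpha z - 1/2 alpha alpha^* g, g) *)
Definition E_alpha (phi : 'M[R]_n) (A : 'M[R]_(m, n)) : 'M[R]_(n + (m + m)) :=
  block_mx 1%:M (row_mx 0 (- adj phi A))
           (col_mx A 0) (block_mx 1%:M (- (half *: (A *m adj phi A))) 0 1%:M).

(* E^*_beta (z,y,g) = (z - beta^* y, y, g + beta z - 1/2 beta beta^* y) *)
Definition E_beta (phi : 'M[R]_n) (B : 'M[R]_(m, n)) : 'M[R]_(n + (m + m)) :=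
  block_mx 1%:M (row_mx (- adj phi B) 0)
           (col_mx 0 B) (block_mx 1%:M 0 (- (half *: (B *m adj phi B))) 1%:M).

Inductive gen_by (S : 'M[R]_(n + (m + m)) -> Prop) : 'M[R]_(n + (m + m)) -> Prop :=
| gen_one : gen_by S 1%:M
| gen_gen g : S g -> gen_by S g
| gen_mul a b : gen_by S a -> gen_by S b -> gen_by S (a *m b)
| gen_inv a : gen_by S a -> gen_by S (invmx a).

Definition DSER_gens (phi : 'M[R]_n) (I : R -> Prop) (M : 'M[R]_(n + (m + m))) : Prop :=
  (exists A, mx_in I A /\ M = E_alpha phi A) \/
  (exists B, mx_in I B /\ M = E_beta phi B).

Definition EO_R (phi : 'M[R]_n) := gen_by (DSER_gens phi (fun _ => True)).
Definition EO_I (phi : 'M[R]_n) (I : R -> Prop) := gen_by (DSER_gens phi I).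
Definition EO_RI (phi : 'M[R]_n) (I : R -> Prop) :=
  gen_by (fun x => exists g h, EO_R phi g /\ EO_I phi I h /\ x = g *m h *m invmx g).

Definition perp_id (e : 'M[R]_n) : 'M[R]_(n + (m + m)) := block_mx e 0 0 1%:M.

End DSER.

(* Main.v *)
Require Import Defs.
From HB Require Import structures.
From mathcomp Require Import all_boot all_order all_algebra.
Import GRing.Theory.
Local Open Scope ring_scope.

Section Aux.
Variable R : comUnitRingType.

Lemma inv_uniq k (X Y : 'M[R]_k) : X *m Y = 1%:M -> invmx X = Y.
Proof.
move=> XY; have [Xu _] := mulmx1_unit XY.
by rewrite -[Y]mul1mx -(mulVmx Xu) -mulmxA XY mulmx1.
Qed.

Lemma conj_inv k (V U a : 'M[R]_k) : V *m U = 1%:M -> U *m V = 1%:M ->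
  invmx (V *m a *m U) = V *m invmx a *m U.
Proof.
move=> VU UV; have [Vu Uu] := mulmx1_unit VU.
case: (boolP (a \in unitmx)) => au.
  apply: inv_uniq.
  rewrite !mulmxA -[V *m a *m U *m V]mulmxA UV mulmx1 -[V *m a *m invmx a]mulmxA.
  by rewrite mulmxV // mulmx1 VU.
have nu : V *m a *m U \notin unitmx.
  by rewrite !unitmx_mul Vu Uu andbT.
by rewrite (invmx_out nu) (invmx_out au).
Qed.

Lemma gen_map n m (S S' : 'M[R]_(n + (m + m)) -> Prop) (V U : 'M[R]_(n + (m + m))) :
  V *m U = 1%:M -> U *m V = 1%:M ->
  (forall N, S N -> S' (V *m N *m U)) ->
  forall N, gen_by S N -> gen_by S' (V *m N *m U).
Proof.
move=> VU UV hS N; elim=> {N}.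
- by rewrite mulmx1 VU; apply: gen_one.
- by move=> g Sg; apply: gen_gen; apply: hS.
- move=> a b _ ha _ hb.
  have -> : V *m (a *m b) *m U = (V *m a *m U) *m (V *m b *m U).
    by rewrite !mulmxA -[V *m a *m U *m V]mulmxA UV mulmx1.
  exact: gen_mul.
- move=> a _ ha; rewrite -conj_inv //; exact: gen_inv.
Qed.

Lemma mx_in_mulr (I : R -> Prop) p q r (A : 'M[R]_(p, q)) (B : 'M[R]_(q, r)) :
  is_ideal I -> mx_in I A -> mx_in I (A *m B).
Proof.
move=> [I0 ID IM] hA i j; rewrite mxE.
apply: (big_ind I) => // k _; rewrite mulrC; exact: IM.
Qed.

End Aux.

Section Key.
Variables (R : comUnitRingType) (n m : nat) (phi' phis eps : 'M[R]_n).
Hypothesis epsu : eps \in unitmx.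
Hypothesis phisu : phis \in unitmx.
Hypothesis hphi : phi' = eps^T *m phis *m eps.

Lemma adj_key (A : 'M[R]_(m, n)) :
  adj phi' (A *m eps) = invmx eps *m adj phis A.
Proof.
rewrite /adj hphi trmx_mul.
have etu : eps^T \in unitmx by rewrite unitmx_tr.
have -> : invmx (eps^T *m phis *m eps) = invmx eps *m invmx phis *m invmx eps^T.
  apply: inv_uniq.
  rewrite !mulmxA -[eps^T *m phis *m eps *m invmx eps]mulmxA mulmxV // mulmx1.
  rewrite -[eps^T *m phis *m invmx phis]mulmxA mulmxV // mulmx1 mulmxV //.
by rewrite !mulmxA -[invmx eps *m invmx phis *m invmx eps^T *m eps^T]mulmxA mulVmx // mulmx1.
Qed.

Lemma conjE (X : 'M[R]_(n, m + m)) (Y : 'M[R]_(m + m, n)) (Z : 'M[R]_(m + m)) :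
  perp_id m (invmx eps) *m block_mx 1%:M X Y Z *m perp_id m eps =
  block_mx 1%:M (invmx eps *m X) (Y *m eps) Z.
Proof.
rewrite /perp_id !mulmx_block !(mul0mx, mulmx0, mul1mx, mulmx1, addr0, add0r).
by rewrite mulVmx.
Qed.

Lemma key_alpha (A : 'M[R]_(m, n)) :
  E_alpha phi' (A *m eps) = perp_id m (invmx eps) *m E_alpha phis A *m perp_id m eps.
Proof.
rewrite /E_alpha conjE mul_mx_row mul_col_mx mulmx0 mul0mx mulmxN adj_key.
by rewrite [A *m eps *m _]mulmxA -[A *m eps *m invmx eps]mulmxA mulmxV // mulmx1.
Qed.

Lemma key_beta (A : 'M[R]_(m, n)) :
  E_beta phi' (A *m eps) = perp_id m (invmx eps) *m E_beta phis A *m perp_id m eps.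
Proof.
rewrite /E_beta conjE mul_mx_row mul_col_mx mulmx0 mul0mx mulmxN adj_key.
by rewrite [A *m eps *m _]mulmxA -[A *m eps *m invmx eps]mulmxA mulmxV // mulmx1.
Qed.

End Key.

Theorem mainTheorem15 (R : comUnitRingType) (I : R -> Prop) (n m : nat)
  (phi' phis eps : 'M[R]_n) :
  (2%:R : R) \is a GRing.unit ->
  is_ideal I ->
  (0 < m)%N ->
  phi'^T = phi' -> phi' \in unitmx ->
  phis^T = phis -> phis \in unitmx ->
  eps \in unitmx ->
  phi' = eps^T *m phis *m eps ->
  forall M : 'M[R]_(n + (m + m)),
    EO_RI phi' I M <->
    exists N : 'M[R]_(n + (m + m)), EO_RI phis I N /\
      M = perp_id m (invmx eps) *m N *m perp_id m eps.
Proof.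
move=> _ hI _ _ _ _ phisu epsu hphi M.
set V := perp_id m (invmx eps); set U := perp_id m eps.
have VU : V *m U = 1%:M.
  by rewrite /V /U /perp_id mulmx_block !(mul0mx, mulmx0, mul1mx, addr0, add0r)
     mulVmx // -scalar_mx_block.
have UV : U *m V = 1%:M.
  by rewrite /V /U /perp_id mulmx_block !(mul0mx, mulmx0, mul1mx, addr0, add0r)
     mulmxV // -scalar_mx_block.
have cancel1 : forall N, U *m (V *m N *m U) *m V = N.
  move=> N; by rewrite !mulmxA UV mul1mx -mulmxA UV mulmx1.
have ideal_all : is_ideal (fun _ : R => True) by [].
have gfwd : forall J, is_ideal J -> forall N, DSER_gens phis J N ->
    DSER_gens phi' J (V *m N *m U).
  move=> J hJ N [[A [hA ->]]|[A [hA ->]]].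
    left; exists (A *m eps); split; first exact: mx_in_mulr.
    by rewrite (@key_alpha _ _ _ _ _ _ epsu phisu hphi).
  right; exists (A *m eps); split; first exact: mx_in_mulr.
  by rewrite (@key_beta _ _ _ _ _ _ epsu phisu hphi).
have gbwd : forall J, is_ideal J -> forall N, DSER_gens phi' J N ->
    DSER_gens phis J (U *m N *m V).
  move=> J hJ N [[A [hA ->]]|[A [hA ->]]].
    left; exists (A *m invmx eps); split; first exact: mx_in_mulr.
    have {1}-> : A = A *m invmx eps *m eps by rewrite -mulmxA mulVmx // mulmx1.
    by rewrite (@key_alpha _ _ _ _ _ _ epsu phisu hphi) cancel1.
  right; exists (A *m invmx eps); split; first exact: mx_in_mulr.
  have {1}-> : A = A *m invmx eps *m eps by rewrite -mulmxA mulVmx // mulmx1.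
  by rewrite (@key_beta _ _ _ _ _ _ epsu phisu hphi) cancel1.
have conjM : forall (W T : 'M[R]_(n + (m + m))) g h,
    W *m T = 1%:M -> T *m W = 1%:M ->
    W *m (g *m h *m invmx g) *m T =
    (W *m g *m T) *m (W *m h *m T) *m invmx (W *m g *m T).
  move=> W T g h WT TW; rewrite conj_inv //.
  by rewrite !mulmxA -[W *m g *m T *m W]mulmxA TW mulmx1
     -[W *m g *m h *m T *m W]mulmxA TW mulmx1.
split.
- move=> hM; exists (U *m M *m V); split; last first.
    by rewrite !mulmxA VU mul1mx -mulmxA VU mulmx1.
  move: hM; apply: gen_map => // x [g [h [hg [hh ->]]]].
  exists (U *m g *m V), (U *m h *m V); split; last split.
  + exact: (@gen_map _ _ _ _ _ _ _ UV VU (gbwd _ ideal_all)).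
  + exact: (@gen_map _ _ _ _ _ _ _ UV VU (gbwd _ hI)).
  + exact: conjM.
- move=> [N [hN ->]]; move: hN; apply: gen_map => // x [g [h [hg [hh ->]]]].
  exists (V *m g *m U), (V *m h *m U); split; last split.
  + exact: (@gen_map _ _ _ _ _ _ _ VU UV (gfwd _ ideal_all)).
  + exact: (@gen_map _ _ _ _ _ _ _ VU UV (gfwd _ hI)).
  + exact: conjM.
Qed.
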